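(* Let $X$ be a real Banach space and $\alpha,\beta>0$. Then: (1) for any $x\in S_X$, a sequence $(y_n)$ is a maximizing sequence in $B_X$ (respectively $S_X$) for $\alpha x$ if and only if it is a maximizing sequence in $B_X$ (respectively $S_X$) for $\beta x$; (2) $B_X$ has property $\mathsf P$ on $\alpha S_X$ if and only if $B_X$ has property $\mathsf P$ on $\beta S_X$; (3) $S_X$ has property $\mathsf P$ on $\alpha S_X$ if and only if $S_X$ has property $\mathsf P$ on $\beta S_X$; where $\mathsf P$ is any one of: remotal, uniquely remotal, strongly remotal, SUR, USUR, sup-compact.
   Context: $B_X,S_X$ are the closed unit ball and unit sphere. For non-empty bounded $F$, $x\in X$, $\delta\ge0$: $r(F,x)=\sup_{y\in F}\|x-y\|$, $Q_F(x,\delta)=\{y\in F:\|x-y\|\ge r(F,x)-\delta\}$, $Q_F(x)=Q_F(x,0)$. A maximizing sequence in $F$ for $x$ is a sequence $(y_n)$ in $F$ with $\|x-y_n\|\to r(F,x)$. On a set $A$, $F$ is: remotal if $Q_F(x)\neq\emptyset$ for each $x\in A$; uniquely remotal if $Q_F(x)$ is a singleton for each $x\in A$; strongly remotal if for every $x\in A$ and $\epsilon>0$ there is $\delta>0$ with $Q_F(x,\delta)\subseteq Q_F(x)+\epsilon B_X$; SUR if uniquely remotal and strongly remotal; USUR if uniquely remotal and for every $\epsilon>0$ there is $\delta>0$ with $Q_F(x,\delta)\subseteq Q_F(x)+\epsilon B_X$ for all $x\in A$; sup-compact if for each $x\in A$ every maximizing sequence in $F$ for $x$ has a subsequence converging to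 an element of $F$. *)

(* Defs.v *)
From HB Require Import structures.
From mathcomp Require Import all_boot all_order all_algebra.
From mathcomp Require Import all_classical all_reals all_analysis.
Set Implicit Arguments. Unset Strict Implicit. Unset Printing Implicit Defensive.
Import Order.TTheory GRing.Theory Num.Theory.
Import numFieldNormedType.Exports.
Local Open Scope classical_set_scope.
Local Open Scope ring_scope.

Section Remotality.
Variables (R : realType) (X : normedModType R).

Definition unit_ball : set X := [set y | `|y| <= 1].
Definition unit_sphere : set X := [set y | `|y| = 1].

Definition scale_set (a : R) (S : set X) : set X := [set a *: y | y in S].

Definition farthest_dist (F : set X) (x : X) : R := sup [set `|x - y| | y in F].

Definition Qset (F : set X) (x : X) (delta : R) : set X :=
  [set y | F y /\ farthest_dist F x - delta <= `|x - y|].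

Definition maximizing_seq (F : set X) (x : X) (y : nat -> X) : Prop :=
  (forall n, F (y n)) /\ (fun n => `|x - y n|) @ \oo --> farthest_dist F x.

(* A `<=` B + eps B_X, written out *)
Definition subset_plus_ball (A B : set X) (eps : R) : Prop :=
  forall z, A z -> exists2 b, B b & `|z - b| <= eps.

Definition remotal_on (F A : set X) : Prop :=
  forall x, A x -> Qset F x 0 !=set0.

Definition uniquely_remotal_on (F A : set X) : Prop :=
  forall x, A x -> exists y, Qset F x 0 = [set y].

Definition strongly_remotal_on (F A : set X) : Prop :=
  forall x, A x -> forall eps : R, 0 < eps ->
    exists2 delta : R, 0 < delta &
      subset_plus_ball (Qset F x delta) (Qset F x 0) eps.

Definition SUR_on (F A : set X) : Prop :=
  uniquely_remotal_on F A /\ strongly_remotal_on F A.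

Definition USUR_on (F A : set X) : Prop :=
  uniquely_remotal_on F A /\
  forall eps : R, 0 < eps ->
    exists2 delta : R, 0 < delta &
      forall x, A x -> subset_plus_ball (Qset F x delta) (Qset F x 0) eps.

Definition sup_compact_on (F A : set X) : Prop :=
  forall x, A x -> forall y : nat -> X, maximizing_seq F x y ->
    exists phi : nat -> nat,
      {homo phi : m n / (m < n)%N >-> (m < n)%N} /\
      exists2 z, F z & (y \o phi) @ \oo --> z.

End Remotality.
Arguments unit_ball {R X}.
Arguments unit_sphere {R X}.


Inductive remotal_property :=
  | Remotal | UniquelyRemotal | StronglyRemotal | SUR | USUR | SupCompact.

Definition has_property (R : realType) (X : normedModType R)
  (P : remotal_property) (F A : set X) : Prop :=
  match P with
  | Remotal => remotal_on F A
  | UniquelyRemotal => uniquely_remotal_on F A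
  | StronglyRemotal => strongly_remotal_on F A
  | SUR => SUR_on F A
  | USUR => USUR_on F A
  | SupCompact => sup_compact_on F A
  end.

(* Main.v *)
Require Import Defs.
From HB Require Import structures.
From mathcomp Require Import all_boot all_order all_algebra.
From mathcomp Require Import all_classical all_reals all_analysis.
From mathcomp Require Import ring lra.
Import Order.TTheory GRing.Theory Num.Theory.
Import numFieldNormedType.Exports.
Local Open Scope classical_set_scope.
Local Open Scope ring_scope.
Set Implicit Arguments. Unset Strict Implicit.

Section Aux.
Variables (R : realType) (X : normedModType R).

Lemma nbound (x y : X) (t : R) : `|x| = 1 -> `|y| <= 1 -> 0 < t ->
  `|t *: x - y| <= t + 1.
Proof.
move=> hx hy ht; apply: le_trans (ler_normB _ _) _.
by rewrite normrZ hx mulr1 gtr0_norm // lerD2l.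
Qed.

Lemma fd_eq (F : set X) (x : X) (t : R) :
  (forall y, F y -> `|y| <= 1) -> `|x| = 1 -> F (- x) -> 0 < t ->
  farthest_dist F (t *: x) = t + 1.
Proof.
move=> hF hx hN ht; rewrite /farthest_dist.
have hm : [set `|t *: x - y| | y in F] (t + 1).
  exists (- x) => //; rewrite opprK -{2}(scale1r x) -scalerDl normrZ hx mulr1.
  by rewrite gtr0_norm // addr_gt0.
have hub : ubound [set `|t *: x - y| | y in F] (t + 1).
  by move=> _ [y Fy <-]; apply: nbound => //; apply: hF.
apply/le_anti/andP; split.
  by apply: ge_sup => //; exists (t + 1).
apply: sup_upper_bound => //; split; first by exists (t + 1).
by exists (t + 1).
Qed.

Definition Cst (a b : R) := (a + b) / a.

Lemma Cst_gt0 a b : 0 < a -> 0 < b -> 0 < Cst a b.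
Proof. by move=> ha hb; rewrite /Cst divr_gt0 // addr_gt0. Qed.

Lemma key (x y : X) (a b d : R) : 0 < a -> 0 < b -> 0 <= d ->
  `|x| = 1 -> `|y| <= 1 -> a + 1 - d <= `|a *: x - y| ->
  b + 1 - Cst a b * d <= `|b *: x - y|.
Proof.
move=> ha hb hd hx hy h1.
have hC : Cst a b * d = d + b / a * d.
  by rewrite /Cst mulrDl divff ?gt_eqF // mulrDl mul1r.
have hbd : 0 <= b / a * d by rewrite mulr_ge0 // divr_ge0 // ltW.
case: (leP a b) => hab.
- have e : b *: (a *: x - y) = a *: (b *: x - y) + (b - a) *: (- y).
    rewrite !scalerBr !scalerA [b * a]mulrC scalerN scalerBl opprB.
    by rewrite addrA subrK.
  have h2 : b * `|a *: x - y| <= a * `|b *: x - y| + (b - a).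
    have := ler_normD (a *: (b *: x - y)) ((b - a) *: (- y)).
    rewrite -e !normrZ normrN (gtr0_norm hb) (gtr0_norm ha) ger0_norm ?subr_ge0 //.
    move=> h; apply: le_trans h _; rewrite lerD2l.
    by rewrite -{2}[b - a]mulr1 ler_wpM2l // subr_ge0.
  have h3 : a * (b + 1 - Cst a b * d) <= a * `|b *: x - y|.
    have -> : a * (b + 1 - Cst a b * d) = a * b + a - (a + b) * d.
      by rewrite /Cst; field; rewrite gt_eqF.
    have : b * (a + 1 - d) <= b * `|a *: x - y| by rewrite ler_wpM2l // ltW.
    nra.
  by rewrite ler_pM2l in h3.
- have e : a *: x - y = (a - b) *: x + (b *: x - y).
    by rewrite scalerBl addrA subrK.
  have h2 : `|a *: x - y| <= (a - b) + `|b *: x - y|.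
    rewrite e; apply: le_trans (ler_normD _ _) _.
    by rewrite normrZ hx mulr1 ger0_norm // subr_ge0 ltW.
  lra.
Qed.

Variable F : set X.
Hypothesis hF : forall y, F y -> `|y| <= 1.
Hypothesis hN : forall x, `|x| = 1 -> F (- x).

Lemma Qsub (x : X) (a b d : R) : `|x| = 1 -> 0 < a -> 0 < b -> 0 <= d ->
  Qset F (a *: x) d `<=` Qset F (b *: x) (Cst a b * d).
Proof.
move=> hx ha hb hd y [Fy hy]; split => //.
rewrite (@fd_eq F x _ hF hx (@hN x hx) hb); rewrite (@fd_eq F x _ hF hx (@hN x hx) ha) in hy.
exact: (@key x y a b d ha hb hd hx (@hF y Fy) hy).
Qed.

Lemma Qeq0 (x : X) (a b : R) : `|x| = 1 -> 0 < a -> 0 < b ->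
  Qset F (a *: x) 0 = Qset F (b *: x) 0.
Proof.
move=> hx ha hb; apply/seteqP; split.
  by have := Qsub hx ha hb (lexx 0); rewrite mulr0.
by have := Qsub hx hb ha (lexx 0); rewrite mulr0.
Qed.

Lemma max_dir (x : X) (a b : R) (y : nat -> X) : `|x| = 1 -> 0 < a -> 0 < b ->
  maximizing_seq F (a *: x) y -> maximizing_seq F (b *: x) y.
Proof.
move=> hx ha hb [Fy hc]; split => //.
rewrite (@fd_eq F x _ hF hx (@hN x hx) hb); rewrite (@fd_eq F x _ hF hx (@hN x hx) ha) in hc.
have hC := Cst_gt0 ha hb.
apply/cvgrPdist_le => e e0.
have hh : \forall t \near \oo, `|(a + 1) - (`|a *: x - y t|)| <= e / Cst a b.
  by move/cvgrPdist_le: hc; apply; rewrite divr_gt0.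
near=> n; have hn : `|(a + 1) - (`|a *: x - y n|)| <= e / Cst a b by near: n; exact: hh.
have b1 := nbound hx (@hF _ (Fy n)) ha.
have b2 := nbound hx (@hF _ (Fy n)) hb.
rewrite ger0_norm ?subr_ge0 // in hn.
have := @key x (y n) a b (a + 1 - `|a *: x - y n|) ha hb.
rewrite subr_ge0 => /(_ b1 hx (@hF _ (Fy n))).
rewrite opprB addrC subrK => /(_ (lexx _)) hk.
rewrite ger0_norm ?subr_ge0 //.
have : Cst a b * (a + 1 - `|a *: x - y n|) <= e.
  by rewrite mulrC -ler_pdivlMr.
lra.
Unshelve. all: by end_near.
Qed.

Lemma prop_dir (P : remotal_property) (a b : R) : 0 < a -> 0 < b ->
  has_property P F (scale_set a unit_sphere) ->
  has_property P F (scale_set b unit_sphere).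
Proof.
move=> ha hb.
have hC := Cst_gt0 hb ha.
have sr : forall eps : R, 0 < eps -> forall x : X, `|x| = 1 -> forall d, 0 < d ->
    subset_plus_ball (Qset F (a *: x) d) (Qset F (a *: x) 0) eps ->
    subset_plus_ball (Qset F (b *: x) (d / Cst b a)) (Qset F (b *: x) 0) eps.
  move=> eps e0 x hx d d0 h z hz.
  have hz' := Qsub hx hb ha (ltW (divr_gt0 d0 hC)) hz.
  rewrite mulrC divfK ?gt_eqF // in hz'.
  by rewrite -(Qeq0 hx ha hb); apply: h.
case: P => /=.
- move=> h _ [x hx <-]; rewrite -(Qeq0 hx ha hb); apply: h; by exists x.
- move=> h _ [x hx <-]; rewrite -(Qeq0 hx ha hb); apply: h; by exists x.
- move=> h _ [x hx <-] eps e0.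
  have [d d0 hd] := h (a *: x) (ex_intro2 _ _ x hx erefl) eps e0.
  exists (d / Cst b a); first by rewrite divr_gt0.
  exact: sr.
- move=> [h1 h2]; split.
    move=> _ [x hx <-]; rewrite -(Qeq0 hx ha hb); apply: h1; by exists x.
  move=> _ [x hx <-] eps e0.
  have [d d0 hd] := h2 (a *: x) (ex_intro2 _ _ x hx erefl) eps e0.
  exists (d / Cst b a); first by rewrite divr_gt0.
  exact: sr.
- move=> [h1 h2]; split.
    move=> _ [x hx <-]; rewrite -(Qeq0 hx ha hb); apply: h1; by exists x.
  move=> eps e0; have [d d0 hd] := h2 eps e0.
  exists (d / Cst b a); first by rewrite divr_gt0.
  move=> _ [x hx <-]; apply: sr => //; apply: hd; by exists x.
- move=> h _ [x hx <-] y hy; apply: (h (a *: x)); first by exists x.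
  exact: max_dir hy.
Qed.

End Aux.

Theorem corollary2p14 (R : realType) (X : completeNormedModType R)
    (alpha beta : R) (halpha : 0 < alpha) (hbeta : 0 < beta) :
  (forall x : X, unit_sphere x -> forall y : nat -> X,
     (maximizing_seq unit_ball (alpha *: x) y <->
      maximizing_seq unit_ball (beta *: x) y) /\
     (maximizing_seq unit_sphere (alpha *: x) y <->
      maximizing_seq unit_sphere (beta *: x) y)) /\
  (forall P : remotal_property,
     has_property P (@unit_ball R X) (scale_set alpha unit_sphere) <->
     has_property P unit_ball (scale_set beta (@unit_sphere R X))) /\
  (forall P : remotal_property,
     has_property P (@unit_sphere R X) (scale_set alpha unit_sphere) <->
     has_property P unit_sphere (scale_set beta (@unit_sphere R X))).
Proof.
have hB1 : forall y : X, unit_ball y -> `|y| <= 1 by [].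
have hB2 : forall x : X, `|x| = 1 -> unit_ball (- x).
  by move=> x hx; rewrite /unit_ball /= normrN hx.
have hS1 : forall y : X, unit_sphere y -> `|y| <= 1.
  by move=> y; rewrite /unit_sphere /= => ->.
have hS2 : forall x : X, `|x| = 1 -> unit_sphere (- x).
  by move=> x hx; rewrite /unit_sphere /= normrN hx.
split; [|split].
- move=> x hx y; split; split; apply: max_dir => //.
- by move=> P; split; apply: prop_dir.
- by move=> P; split; apply: prop_dir.
Qed.
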